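(* Fix an instance $I=\{H,M,\mathbf r\}$ of the offline Notification Timing Problem with $M$ employees and $L=M$ shifts. Let $\mathcal X=\{\mathcal X_i\}_{i\in\mathcal E}$ be any preference profile, and let $B^{\mathcal X}(S)$ denote the total number of (realized) bumps produced by a feasible schedule $S$ under $\mathcal X$. Let $S^*_{\mathcal X}$ be a feasible schedule minimizing $B^{\mathcal X}(S)$, let $S^*_p$ be a feasible schedule minimizing the total number of potential bumps $P(S)$, and let $S^*_I$ be a feasible schedule minimizing $B^{\mathcal I}(S)$, where $\mathcal I$ is the identical-preference profile (all employees have the same strict ranking of shifts). Then $$B^{\mathcal X}(S^*_{\mathcal X})\;\le\; P(S^*_p)\;=\;B^{\mathcal I}(S^*_I).$$
   Context: Employees $\mathcal E=\{1,\dots,M\}$ are ordered by seniority ($i<j$ means $i$ is more senior). Each employee $i$ has a response delay $r_i\in\mathbb Z_{\ge0}$; the horizon is $H\in\mathbb Z_{>0}$. A schedule is $S=(s_i,e_i)_{i\in\mathcal E}$ with notification times $s_i\ge 0$ and response times $e_i=s_i+r_i$; it is feasible if $s_1\le s_2\le\dots\le s_M$ and $e_i\le H$ for all $i$. There are $L=M$ shifts $\mathcal L$, and each employee $i$ has a strict preference order $\mathcal X_i$ over all shifts. Assignment dynamics: responses are processed in increasing order of response time; employees responding at the same time are processed in order of seniority. When an employee $i$ responds (or is bumped), $i$ claims its most preferred shift among those not currently held by an employee more senior than $i$. If that shift is unoccupied, $i$ takes it; if it is held by a junior employee $j>i$, then $i$ takes it, $j$ is bumped (this counts as one bump), and $j$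 immediately repeats the same rule; this may create a chain of bumps. If no shift is available, the employee gets no shift. The total number of bumps $B^{\mathcal X}(S)$ is the total number of such bump events over the whole process. Potential bumps: for a schedule $S$, $p_i=|\{j\in\mathcal E: i<j,\ e_i>e_j\}|$ and $P(S)=\sum_{i\in\mathcal E}p_i$ (the number of pairs in which a senior employee responds strictly later than a junior one). *)

(* Defs.v *)
From mathcomp Require Import all_boot all_fingroup.
Set Implicit Arguments. Unset Strict Implicit. Unset Printing Implicit Defensive.

(* Employees and shifts are both 'I_M (L = M); smaller index = more senior. *)
(* A schedule is given by its notification times s : 'I_M -> nat; the
   response time of i is e i = s i + r i. *)
Definition resp M (r s : 'I_M -> nat) (i : 'I_M) : nat := s i + r i.

Definition feasible M (H : nat) (r s : 'I_M -> nat) : Prop :=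
  (forall i j : 'I_M, i <= j -> s i <= s j) /\
  (forall i : 'I_M, resp r s i <= H).

(* A preference profile: X i k is employee i's (k+1)-th most preferred shift;
   X i is a permutation, i.e. a strict ranking of all shifts. *)
Definition profile M := 'I_M -> {perm 'I_M}.

(* state: for each shift, the employee currently holding it (if any) *)
Definition state M := {ffun 'I_M -> option 'I_M}.

Definition empty_state M : state M := [ffun _ => None].

Definition avail M (st : state M) (i l : 'I_M) : bool :=
  if st l is Some j then i < j else true.

Definition choice M (X : profile M) (st : state M) (i : 'I_M) : option 'I_M :=
  ohead [seq l <- [seq X i k | k <- enum 'I_M] | avail st i l].

Definition upd M (st : state M) (l i : 'I_M) : state M :=
  [ffun l' => if l' == l then Some i else st l'].

(* i claims a shift; returns new state and number of bumps in the chain.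
   Fuel: each chain has strictly increasing claimant indices, so at most M
   claims occur; fuel M.+1 is never exhausted. *)
Fixpoint claim M (X : profile M) (fuel : nat) (st : state M) (i : 'I_M)
  : state M * nat :=
  match fuel with
  | 0 => (st, 0)
  | n.+1 =>
    match choice X st i with
    | None => (st, 0)
    | Some l =>
      match st l with
      | None => (upd st l i, 0)
      | Some j => let p := claim X n (upd st l i) j in (p.1, p.2.+1)
      end
    end
  end.

Definition proc_order M (r s : 'I_M -> nat) : seq 'I_M :=
  sort (fun i j : 'I_M => (resp r s i < resp r s j) ||
                          ((resp r s i == resp r s j) && (i <= j)))
       (enum 'I_M).

Definition run M (X : profile M) (ord : seq 'I_M) : state M * nat :=
  foldl (fun p i => let q := claim X M.+1 p.1 i in (q.1, p.2 + q.2))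
        (empty_state M, 0) ord.

Definition bumps M (X : profile M) (r s : 'I_M -> nat) : nat :=
  (run X (proc_order r s)).2.

Definition potential M (r s : 'I_M -> nat) : nat :=
  \sum_(i < M) \sum_(j < M | (i < j) && (resp r s j < resp r s i)) 1.

Definition is_min M (H : nat) (r : 'I_M -> nat) (f : ('I_M -> nat) -> nat)
  (S : 'I_M -> nat) : Prop :=
  feasible H r S /\ forall S', feasible H r S' -> f S <= f S'.

(* Main.v *)
Require Import Defs.
From mathcomp Require Import zify.
From mathcomp Require Import all_boot all_fingroup.
From HB Require Import structures.
Set Implicit Arguments. Unset Strict Implicit. Unset Printing Implicit Defensive.

Section Gen.
Variable M : nat.
Implicit Types (A Q : {set 'I_M}).

Definition cnt A (P : 'I_M -> bool) := #|[set y in A | P y]|.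
Definition rk A (x : 'I_M) := cnt A (fun y => y < x).
Definition ab A (x : 'I_M) := cnt A (fun y => x < y).

Lemma cntU A c P : c \notin A -> cnt (c |: A) P = P c + cnt A P.
Proof.
move=> cA; rewrite /cnt; case Pc: (P c).
  have -> : [set y in c |: A | P y] = c |: [set y in A | P y].
    by apply/setP => y; rewrite !inE; case: (y =P c) => [->|]; rewrite ?Pc.
  by rewrite cardsU1 inE (negbTE cA).
have -> : [set y in c |: A | P y] = [set y in A | P y] => //.
by apply/setP => y; rewrite !inE; case: (y =P c) => [->|]; rewrite ?Pc ?(negbTE cA).
Qed.

Lemma cntD A j P : j \in A -> cnt A P = P j + cnt (A :\ j) P.
Proof.
move=> jA; rewrite /cnt (cardsD1 j) !inE jA /=; congr (_ + _).
by apply: eq_card => y; rewrite !inE; case: (y =P j) => [->|].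
Qed.

Lemma cnt_eq A P P' : (forall y, y \in A -> P y = P' y) -> cnt A P = cnt A P'.
Proof.
move=> h; rewrite /cnt; apply: eq_card => y; rewrite !inE.
by case yA: (y \in A) => //=; rewrite h.
Qed.

Lemma cnt_le A P : cnt A P <= #|A|.
Proof. by apply: subset_leq_card; apply/subsetP => y; rewrite inE => /andP[]. Qed.

Lemma lt_card (S T : {set 'I_M}) x :
  S \subset T -> x \in T -> x \notin S -> #|S| < #|T|.
Proof. by move=> ST xT xS; apply: proper_card; apply/properP; split => //; exists x. Qed.

Lemma rk_lt A (x y : 'I_M) : x \in A -> x < y -> rk A x < rk A y.
Proof.
move=> xA xy; apply: (@lt_card _ _ x).
- by apply/subsetP => z; rewrite !inE => /andP[-> /= /ltn_trans]; apply.
- by rewrite !inE xA.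
- by rewrite !inE ltnn andbF.
Qed.

Lemma rk_le A (x y : 'I_M) : x <= y -> rk A x <= rk A y.
Proof.
move=> xy; apply: subset_leq_card.
by apply/subsetP => z; rewrite !inE => /andP[-> /= /leq_trans]; apply.
Qed.

Lemma rk_exists n : forall A, #|A| = n -> forall k, k < n -> exists2 x, x \in A & rk A x = k.
Proof.
elim: n => [//|n IH] A cA k kn.
have [x0 x0A] : exists x0, x0 \in A.
  by apply/set0Pn; rewrite -card_gt0 cA.
case: (@arg_maxnP _ x0 (fun x => x \in A) val x0A) => m mA mmax.
have cAm : #|A :\ m| = n by move: cA; rewrite (cardsD1 m) mA add1n => -[].
have rkm : forall x, x \in A :\ m -> rk A x = rk (A :\ m) x.
  move=> x; rewrite !inE => /andP[xm xA].
  rewrite /rk (@cntD A m (fun y => y < x) mA).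
  have h := mmax x xA; move: h; rewrite /= leq_eqVlt; case/orP => [/eqP/val_inj exm|]; first by rewrite exm eqxx in xm.
  by move=> xm'; rewrite ltnNge (ltnW xm').
case: (ltngtP k n) => [kn'| |ekn]; last 2 first.
- by move=> h; move: kn; rewrite ltnS leqNgt h.
- exists m => //; rewrite /rk (@cntD A m (fun y => y < m) mA) ltnn add0n ekn -cAm.
  apply: eq_card => y; rewrite !inE; case: (y =P m) => [->|ym] //=; rewrite ?ltnn ?andbF //.
  case yA: (y \in A) => //=; have h := mmax y yA; move: h; rewrite /= leq_eqVlt; case/orP => [/eqP/val_inj //|->//].
have [x xA rx] := IH _ cAm k kn'.
by exists x; [move: xA; rewrite inE => /andP[] | rewrite rkm].
Qed.

End Gen.

HB.lock Definition holders M (st : state M) := [set k | [exists l, st l == Some k]].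

Section Claim.
Variable M : nat.
Implicit Types (A Q : {set 'I_M}) (st : state M).

Lemma holdersE st k : (k \in holders st) = [exists l, st l == Some k].
Proof. by rewrite holders.unlock inE. Qed.

Lemma choice_avail X st i l : choice X st i = Some l -> avail st i l.
Proof.
rewrite /choice; case E: [seq _ <- _ | _] => [|a s] //= [<-].
have : a \in a :: s by rewrite mem_head.
by rewrite -E mem_filter => /andP[].
Qed.

Lemma holders_upd st l i : holders (upd st l i) \subset i |: holders st.
Proof.
apply/subsetP => k; rewrite !inE !holdersE => /existsP[l'].
rewrite /upd ffunE; case: (l' == l) => [/eqP[->]|h]; first by rewrite eqxx.
by apply/orP; right; apply/existsP; exists l'.
Qed.

Lemma holdersP st l j : st l = Some j -> j \in holders st.
Proof. by move=> h; rewrite holdersE; apply/existsP; exists l; rewrite h. Qed.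

Lemma claim_le X n : forall st i,
  (claim X n st i).2 <= ab (holders st) i /\
  holders (claim X n st i).1 \subset i |: holders st.
Proof.
elim: n => [|n IH] st i /=.
  by split => //; apply/subsetP => k kh; rewrite inE kh orbT.
case E: (choice X st i) => [l|] /=; last by split => //; apply/subsetP => k kh; rewrite inE kh orbT.
have av := choice_avail E; case El: (st l) => [j|] /=; last by split => //; apply: holders_upd.
rewrite /avail El in av.
have jh : j \in holders st by apply: (holdersP El).
have [IH1 IH2] := IH (upd st l i) j.
split.
  apply: leq_ltn_trans IH1 _.
  apply: (@leq_trans #|j |: [set y in holders (upd st l i) | j < y]|).
    by rewrite cardsU1 !inE ltnn andbF.
  apply: subset_leq_card; apply/subsetP => y; rewrite !inE.
  case/orP => [/eqP ->|/andP[yh jy]]; first by rewrite jh av.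
  have := subsetP (holders_upd st l i) y yh; rewrite !inE => /orP[/eqP yi|->].
    by move: jy; rewrite yi ltnNge (ltnW av).
  by rewrite (ltn_trans av jy).
apply: subset_trans IH2 _; apply/subsetP => y; rewrite !inE => /orP[/eqP ->|]; first by rewrite jh orbT.
move=> yh; have := subsetP (holders_upd st l i) y yh; by rewrite !inE.
Qed.
End Claim.

Lemma ohead_filter (T : eqType) (P : pred T) (s : seq T) x :
  x \in s -> P x -> (forall y, y \in s -> index y s < index x s -> ~~ P y) ->
  ohead (filter P s) = Some x.
Proof.
elim: s => [//|a s IH] /=; rewrite in_cons => xs Px h.
case: (a =P x) => [->|ax]; first by rewrite Px.
have Pa : ~~ P a.
  apply: h; first by rewrite mem_head.
  by rewrite /= eqxx; case: (a =P x).
rewrite (negbTE Pa); apply: IH => //.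
  by case/orP: xs => // /eqP ex; case: ax.
move=> y ys; case: (a =P y) => [<- _|ay]; first exact: Pa.
move=> hy; apply: h; first by rewrite in_cons ys orbT.
by move: hy; rewrite /=; case: (a =P y) => // _; case: (a =P x).
Qed.

Section Ident.
Variable M : nat.
Variable sigma : {perm 'I_M}.
Implicit Types (A Q : {set 'I_M}) (st : state M).

Definition canonP Q st := forall k x : 'I_M,
  (st (sigma k) == Some x) = (x \in Q) && (rk Q x == k).

Lemma choice_ident st c (k : 'I_M) : avail st c (sigma k) ->
  (forall k' : 'I_M, k' < k -> ~~ avail st c (sigma k')) ->
  choice (fun _ => sigma) st c = Some (sigma k).
Proof.
move=> ak hk; rewrite /choice; apply: ohead_filter => //.
  by apply: map_f; rewrite mem_enum.
move=> y /mapP[k' _ ->]; rewrite !(index_map (@perm_inj _ sigma)).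
move=> h; apply: hk; have e1 := index_enum_ord k'; have e2 := index_enum_ord k.
by rewrite -e1 -e2.
Qed.

Lemma claim_ident n : forall Q st c, c \notin Q -> #|Q| < M -> canonP Q st ->
  ab Q c < n ->
  canonP (c |: Q) (claim (fun _ => sigma) n st c).1 /\
  (claim (fun _ => sigma) n st c).2 = ab Q c.
Proof.
elim: n => [//|n IH] Q st c cQ QM cs abn.
have kM : rk Q c < M by apply: leq_ltn_trans QM; apply: cnt_le.
pose k := Ordinal kM.
have below : forall k' : 'I_M, k' < k -> exists2 x, (x \in Q) && (x < c) & st (sigma k') = Some x.
  move=> k' kk.
  have [x xA rx] := @rk_exists _ #|[set y in Q | y < c]| _ erefl k' kk.
  exists x; first by move: xA; rewrite inE.
  apply/eqP; rewrite cs; move: xA; rewrite inE => /andP[-> xc] /=.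
  rewrite -rx /rk /cnt; apply/eqP; apply: eq_card => y; rewrite !inE.
  case yQ: (y \in Q) => //=; case yx: (y < x) => //=; last by rewrite andbF.
  by rewrite (ltn_trans yx xc).
have hk : forall x, st (sigma k) = Some x -> x \in Q /\ rk Q x = rk Q c.
  move=> x h; have := cs k x; rewrite h eqxx => /esym/andP[xQ /eqP ->]; done.
have avk : avail st c (sigma k).
  rewrite /avail; case E: (st (sigma k)) => [j|] //.
  have [jQ rj] := hk j E.
  case: (ltngtP j c) => [jc|//|/val_inj ejc]; last by rewrite -ejc jQ in cQ.
  by have := rk_lt jQ jc; rewrite rj ltnn.
have ch : choice (fun _ => sigma) st c = Some (sigma k).
  apply: choice_ident => // k' kk; rewrite /avail; have [x /andP[_ xc] ->] := below k' kk.
  by rewrite -leqNgt ltnW.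
rewrite /= ch.
case Est: (st (sigma k)) => [j|] /=.
  have [jQ rj] := hk j Est.
  have cj : c < j by move: avk; rewrite /avail Est.
  have jc : j != c by apply/eqP => ejc; move: cj; rewrite ejc ltnn.
  have ordh : forall x, x \in Q -> x != j -> (c < x) = (j < x).
    move=> x xQ xj; case cx: (c < x).
      case: (ltngtP x j) => [xj'|//|/val_inj exj]; last by rewrite exj eqxx in xj.
      by have := rk_lt xQ xj'; rewrite rj ltnNge rk_le // ltnW.
    by apply/esym/negbTE; rewrite -leqNgt; apply: ltnW; apply: leq_ltn_trans cj; rewrite leqNgt cx.
  pose Q' := c |: (Q :\ j).
  have cQj : c \notin Q :\ j by rewrite in_setD1 negb_and cQ orbT.
  have rkQ' : forall x, rk Q' x = (c < x) + rk (Q :\ j) x.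
    by move=> x; rewrite /rk cntU.
  have rkQ : forall x, rk Q x = (j < x) + rk (Q :\ j) x.
    by move=> x; rewrite /rk (cntD _ jQ).
  have rkeq : forall x, x \in Q -> x != j -> rk Q' x = rk Q x.
    by move=> x xQ xj; rewrite rkQ' rkQ ordh.
  have rkc : rk Q' c = rk Q c.
    by rewrite rkQ' rkQ ltnn ltnNge (ltnW cj).
  have jQ' : j \notin Q'.
    by rewrite in_setU1 in_setD1 eqxx (negbTE jc).
  have cQ' : #|Q'| < M.
    by move: QM; rewrite (cardsD1 j Q) jQ cardsU1 cQj.
  have abQ : ab Q c = (ab Q' j).+1.
    rewrite /ab (cntD _ jQ) cj cntU // ltnNge (ltnW cj) add0n add1n; congr (_.+1).
    apply: cnt_eq => y; rewrite in_setD1 => /andP[yj yQ]; exact: ordh.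
  have cs' : canonP Q' (upd st (sigma k) c).
    move=> k' x; rewrite /upd ffunE (inj_eq (@perm_inj _ sigma)) in_setU1 in_setD1.
    case: (k' =P k) => [->|nk].
      case: (x =P c) => [->|xc] /=; first by rewrite eqxx rkc eqxx.
      have -> : (Some c == Some x) = false by apply/eqP => -[] /esym.
      case xj: (x == j) => //=; case xQ: (x \in Q) => //=.
      rewrite rkeq ?xj //; case: (ltngtP x c) => [xc'|cx|/val_inj //].
        by rewrite (ltn_eqF (rk_lt xQ xc')).
      have jx : j < x by rewrite -ordh ?xj.
      by rewrite eq_sym -rj (ltn_eqF (rk_lt jQ jx)).
    rewrite cs; case: (x =P c) => [->|xc] /=.
      rewrite (negbTE cQ) rkc; apply/esym/eqP => h; apply: nk; apply: val_inj; by rewrite /= -h.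
    case: (x =P j) => [->|xj] /=.
      rewrite jQ rj; apply/eqP => h; apply: nk; apply: val_inj; by rewrite /= -h.
    case xQ: (x \in Q) => //=.
    by rewrite rkeq //; apply/eqP.
  have abn' : ab Q' j < n by rewrite -ltnS -abQ.
  have [IH1 IH2] := IH Q' _ j jQ' cQ' cs' abn'.
  have eQ : j |: Q' = c |: Q.
    apply/setP => y; rewrite !in_setU1 in_setD1.
    case: (y =P j) => [->|] /=; first by rewrite jQ orbT.
    by case: (y =P c).
  by rewrite -eQ; split => //; rewrite IH2 abQ.
have belowc : forall y, y \in Q -> y < c.
  move=> y yQ; case: (ltngtP y c) => [//|cy|/val_inj eyc]; last by move: cQ; rewrite -eyc yQ.
  have lt : rk Q c < #|Q|.
    apply: (@lt_card _ _ _ y) => //; first by apply/subsetP => z; rewrite inE => /andP[].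
    by rewrite inE yQ /= ltnNge (ltnW cy).
  have [x xQ rx] := @rk_exists _ #|Q| Q erefl _ lt.
  have := cs k x; rewrite Est xQ rx /= eqxx //.
have ab0 : ab Q c = 0.
  apply/eqP; rewrite cards_eq0; apply/eqP/setP => y; rewrite !inE.
  by case yQ: (y \in Q) => //=; rewrite ltnNge (ltnW (belowc y yQ)).
split => //.
move=> k' x; rewrite /upd ffunE (inj_eq (@perm_inj _ sigma)) in_setU1 /rk cntU // -/(rk Q x).
case: (k' =P k) => [->|nk].
  case: (x =P c) => [->|xc] /=.
    by rewrite eqxx ltnn add0n eqxx.
  have -> : (Some c == Some x) = false by apply/eqP => -[] /esym.
  case xQ: (x \in Q) => //=.
  have xc' := belowc x xQ; rewrite ltnNge (ltnW xc') /=.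
  by rewrite add0n (ltn_eqF (rk_lt xQ xc')).
rewrite cs; case: (x =P c) => [->|xc] /=.
  rewrite (negbTE cQ) ltnn /=; apply/esym/eqP => h; apply: nk; apply: val_inj; by rewrite /= -h.
case xQ: (x \in Q) => //=.
by rewrite ltnNge (ltnW (belowc x xQ)).
Qed.
End Ident.

Definition step M (X : profile M) (p : state M * nat) (i : 'I_M) :=
  let q := claim X M.+1 p.1 i in (q.1, p.2 + q.2).

Fixpoint pcost M (Q : {set 'I_M}) (p : seq 'I_M) : nat :=
  if p is a :: p' then ab Q a + pcost (a |: Q) p' else 0.

Lemma run_le M (X : profile M) p : forall (Q : {set 'I_M}) (st : state M) b, holders st \subset Q ->
  (foldl (step X) (st, b) p).2 <= b + pcost Q p.
Proof.
elim: p => [|a p IH] Q st b hQ /=; first by rewrite addn0.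
have [h1 h2] := claim_le X M.+1 st a.
apply: leq_trans (IH (a |: Q) _ _ _) _.
  by apply: subset_trans h2 _; apply: setUS.
rewrite /= -addnA leq_add2l leq_add2r; apply: leq_trans h1 _.
apply: subset_leq_card; apply/subsetP => y; rewrite !inE => /andP[/(subsetP hQ) -> ->].
done.
Qed.

Lemma run_eq M (sigma : {perm 'I_M}) p : forall (Q : {set 'I_M}) (st : state M) b,
  canonP sigma Q st -> uniq p -> all (fun a => a \notin Q) p -> #|Q| + size p <= M ->
  (foldl (step (fun _ => sigma)) (st, b) p).2 = b + pcost Q p.
Proof.
elim: p => [|a p IH] Q st b cs /=; first by move=> *; rewrite addn0.
case/andP=> ap up /andP[aQ allp] sz.
have QM : #|Q| < M by apply: leq_trans sz; rewrite addnS ltnS leq_addr.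
have abM : ab Q a < M.+1 by apply: leq_trans (cnt_le _ _) _; apply: ltnW.
have [h1 h2] := claim_ident aQ QM cs abM.
rewrite /= (IH (a |: Q)) //.
- by rewrite h2 addnA.
- apply/allP => y yp; rewrite in_setU1 negb_or (allP allp y yp) andbT.
  by apply/eqP => eya; move: ap; rewrite -eya yp.
- by rewrite cardsU1 aQ add1n addSn -addnS.
Qed.

Section Order.
Variable M : nat.
Variables r s : 'I_M -> nat.

Definition leT (i j : 'I_M) := (resp r s i < resp r s j) || ((resp r s i == resp r s j) && (i <= j)).

Lemma leT_total : total leT.
Proof. move=> i j; rewrite /leT; lia. Qed.

Lemma leT_trans : transitive leT.
Proof. move=> j i k; rewrite /leT; lia. Qed.

Lemma leT_gt (i j : 'I_M) : leT i j -> j < i -> resp r s i < resp r s j.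
Proof. rewrite /leT; lia. Qed.

Lemma pcost_sum p : forall (Q U : {set 'I_M}), sorted leT p ->
  (forall q a, q \in Q -> a \in p -> leT q a) -> Q :|: [set x in p] = U ->
  pcost Q p = \sum_(a <- p) #|[set k in U | (a < k) && (resp r s k < resp r s a)]|.
Proof.
elim: p => [|a p IH] Q U srt hQ hU /=; first by rewrite big_nil.
rewrite big_cons; congr (_ + _).
  apply: eq_card => k; rewrite -hU !inE.
  case kQ: (k \in Q) => /=.
    case ak: (a < k) => //=; apply/esym; apply: leT_gt ak.
    by apply: hQ => //; rewrite mem_head.
  case: (k =P a) => [->|ka] /=; first by rewrite ltnn.
  case kp: (k \in p) => //=; case ak: (a < k) => //=.
  have := allP (order_path_min leT_trans srt) k kp.
  rewrite /leT; lia.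
apply: IH.
- exact: path_sorted srt.
- move=> q b; rewrite in_setU1 => /orP[/eqP -> bp|qQ bp].
    exact: allP (order_path_min leT_trans srt) b bp.
  by apply: hQ => //; rewrite in_cons bp orbT.
- apply/setP => y; rewrite -hU !inE; case: (y =P a) => //=; by rewrite orbT.
Qed.

Lemma pot_eq : pcost set0 (proc_order r s) = potential r s.
Proof.
have po : proc_order r s = sort leT (enum 'I_M) by [].
rewrite (@pcost_sum _ set0 setT).
- rewrite /potential (perm_big (index_enum 'I_M)); last first.
    apply: uniq_perm; first by rewrite po sort_uniq enum_uniq.
      exact: index_enum_uniq.
    by move=> x; rewrite po mem_sort mem_enum mem_index_enum.
  apply: eq_bigr => i _; rewrite sum1dep_card; apply: eq_card => k; rewrite !inE.
  done.
- by rewrite po; exact: (sort_sorted leT_total).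
- by move=> q a; rewrite inE.
- by apply/setP => y; rewrite !inE po mem_sort mem_enum.
Qed.
End Order.

Lemma holders0 M : holders (empty_state M) = set0.
Proof.
apply/setP => k; rewrite holdersE inE; apply/existsP => -[l]; by rewrite ffunE.
Qed.

Lemma bumps_le M (X : profile M) r s : bumps X r s <= potential r s.
Proof.
change ((foldl (step X) (empty_state M, 0) (proc_order r s)).2 <= potential r s).
have h := @run_le M X (proc_order r s) set0 (empty_state M) 0.
rewrite holders0 sub0set add0n pot_eq in h; exact: h.
Qed.

Lemma bumps_eq M (sigma : {perm 'I_M}) r s : bumps (fun _ => sigma) r s = potential r s.
Proof.
change ((foldl (step (fun _ => sigma)) (empty_state M, 0) (proc_order r s)).2 = potential r s).
rewrite (@run_eq _ _ _ set0) ?add0n ?pot_eq //.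
- by move=> k x; rewrite ffunE inE.
- by rewrite sort_uniq enum_uniq.
- by apply/allP => x _; rewrite inE.
- by rewrite cards0 add0n size_sort size_enum_ord.
Qed.

Theorem theorem1 (M H : nat) (r : 'I_M -> nat) (X : profile M)
  (sigma : {perm 'I_M}) (SX Sp SI : 'I_M -> nat) :
  0 < H ->
  is_min H r (bumps X r) SX ->
  is_min H r (potential r) Sp ->
  is_min H r (bumps (fun _ => sigma) r) SI ->
  bumps X r SX <= potential r Sp /\
  potential r Sp = bumps (fun _ => sigma) r SI.
Proof.
move=> _ [fX mX] [fp mp] [fI mI]; split.
  by apply: leq_trans (mX _ fp) (bumps_le _ _ _).
apply/eqP; rewrite eqn_leq; apply/andP; split.
  by rewrite bumps_eq; apply: mp.
by have := mI _ fp; rewrite !bumps_eq.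
Qed.
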